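(* Let $\alpha>-1$, let $\hat L^\alpha_n$ be the monic Laguerre polynomials, and let $(\rho_n)_{n\ge0}$ be positive real numbers such that for some $\nu>0$ $$\frac{\rho_{n-1}}{\rho_n}\le\nu,\quad n\ge1.$$ Let $K$ be a positive integer and $\gamma_0,\dots,\gamma_K$ real numbers with $\gamma_0=1$, $\gamma_K\neq0$. Then the polynomial $$q_n(x)=\sum_{j=0}^K\gamma_j\rho_{n-j}\hat L^\alpha_{n-j}(x)$$ has only real and simple zeros for $$n\ge\max\left\{\frac18\left(23\nu\,2^{K-1}\frac{(23\nu)^{K-1}-1}{23\nu-1}\Gamma_2-2|\alpha|\right),\ \frac{\nu-\alpha+1}{2},\ \alpha+9,\ 2K\right\},$$ where $\Gamma_2=\max\{|\gamma_j|:2\le j\le K\}$, and these zeros interlace the zeros of $L^\alpha_{n-1}$. Moreover, for $n$ sufficiently large all the zeros of $q_n$ are positive.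
   Context: $L^\alpha_n$ is the Laguerre polynomial of degree $n$, orthogonal with respect to $x^\alpha e^{-x}dx$ on $(0,\infty)$, and $\hat L^\alpha_n=(-1)^nn!L^\alpha_n$ is its monic version; they satisfy $x\hat L^\alpha_n=\hat L^\alpha_{n+1}+(2n+\alpha+1)\hat L^\alpha_n+n(n+\alpha)\hat L^\alpha_{n-1}$. When $23\nu=1$ the quotient $\frac{(23\nu)^{K-1}-1}{23\nu-1}$ is read as $\sum_{j=0}^{K-2}(23\nu)^j$. Interlacing: given two finite sets $U,V$ of reals, $U$ interlaces $V$ if $\min U<\min V$ and between any two consecutive elements of either set there is an element of the other; here $U$ is the zero set of $q_n$ and $V$ that of $L^\alpha_{n-1}$. *)

(* Defs.v *)
From HB Require Import structures.
From mathcomp Require Import all_boot all_order all_algebra.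
From mathcomp Require Import reals.
Set Implicit Arguments. Unset Strict Implicit. Unset Printing Implicit Defensive.
Import Order.TTheory GRing.Theory Num.Theory.
Local Open Scope ring_scope.

(* Monic Laguerre polynomials \hat L^alpha_n, defined by the three-term
   recurrence  x L_n = L_{n+1} + (2n+alpha+1) L_n + n(n+alpha) L_{n-1},
   with L_0 = 1, L_1 = x - (alpha+1). *)
Fixpoint hatL_pair {R : realType} (alpha : R) (n : nat) : {poly R} * {poly R} :=
  match n with
  | 0%N => (1, 'X - (alpha + 1)%:P)
  | k.+1 => let: (p0, p1) := hatL_pair alpha k in
            (p1, ('X - (2 * k.+1%:R + alpha + 1)%:P) * p1
                   - (k.+1%:R * (k.+1%:R + alpha)) *: p0)
  end.

Definition hatL {R : realType} (alpha : R) (n : nat) : {poly R} :=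
  (hatL_pair alpha n).1.

Definition Lag {R : realType} (alpha : R) (n : nat) : {poly R} :=
  ((-1) ^+ n / (n`!)%:R) *: hatL alpha n.

(* ((c)^(K-1) - 1)/(c - 1), read as sum_{j=0}^{K-2} c^j when c = 1 *)
Definition geomq {R : realType} (c : R) (K : nat) : R :=
  if c == 1 then \sum_(j < K.-1) c ^+ j else (c ^+ K.-1 - 1) / (c - 1).

Definition Gamma2 {R : realType} (gamma : nat -> R) (K : nat) : R :=
  \big[Num.max/0]_(2 <= j < K.+1) `|gamma j|.

Definition lag_comb {R : realType} (alpha : R) (rho gamma : nat -> R) (K n : nat)
  : {poly R} :=
  \sum_(0 <= j < K.+1) (gamma j * rho (n - j)%N) *: hatL alpha (n - j)%N.

Definition real_simple_zeros {R : realType} (p : {poly R}) : Prop :=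
  p != 0 /\ exists s : seq R,
    sorted <%R s /\ p = lead_coef p *: \prod_(x <- s) ('X - x%:P).

Definition consec_between {R : realType} (U V : R -> Prop) : Prop :=
  forall u1 u2, U u1 -> U u2 -> u1 < u2 ->
    (forall u, U u -> ~ (u1 < u /\ u < u2)) ->
    exists v, V v /\ u1 < v /\ v < u2.

Definition interlaces {R : realType} (U V : R -> Prop) : Prop :=
  (exists u v, U u /\ (forall u', U u' -> u <= u') /\
               V v /\ (forall v', V v' -> v <= v') /\ u < v)
  /\ consec_between U V /\ consec_between V U.

Definition zeros {R : realType} (p : {poly R}) : R -> Prop := fun x => root p x.

(* Main.v *)
Require Import Defs.
From HB Require Import structures.
From mathcomp Require Import all_boot all_order all_algebra.
From mathcomp Require Import reals.
From mathcomp Require Import polyrcf.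
From mathcomp Require Import ring lra zify.
Import Order.TTheory GRing.Theory Num.Theory.
Local Open Scope ring_scope.

Set Implicit Arguments. Unset Strict Implicit. Unset Printing Implicit Defensive.

Section Gen.
Variable R : realType.

Lemma sg_pos (x : R) k : Num.sg x = (-1) ^+ k -> 0 < (-1) ^+ k * x.
Proof.
move=> h.
have x0 : x != 0.
  apply/negP=> /eqP x0; move: h; rewrite x0 sgr0 => /eqP.
  by rewrite eq_sym signr_eq0.
by rewrite -h -normrEsg normr_gt0.
Qed.

Lemma prod_sign (z : nat -> R) x k j : (j <= k)%N ->
  (forall i, (i < j)%N -> z i < x) ->
  (forall i, (j <= i)%N -> (i < k)%N -> x < z i) ->
  0 < (-1) ^+ (k - j) * \prod_(0 <= i < k) (x - z i).
Proof.
elim: k j => [|k IH] j.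
  rewrite leqn0 => /eqP -> _ _; rewrite big_geq // expr0 mul1r; exact: ltr01.
move=> jk Hl Hr; rewrite big_nat_recr //=.
have [jk'|jk'] := leqP j k.
  have h1 := IH j jk' Hl (fun i ji ik => Hr i ji (ltnW ik)).
  have h2 : x - z k < 0 by rewrite subr_lt0; apply: Hr.
  rewrite subSn // exprS.
  have -> : -1 * (-1) ^+ (k - j) * (\prod_(0 <= i < k) (x - z i) * (x - z k)) =
    ((-1) ^+ (k - j) * \prod_(0 <= i < k) (x - z i)) * (- (x - z k)) by ring.
  by apply: mulr_gt0 => //; rewrite oppr_gt0.
have ej : j = k.+1 by apply/eqP; rewrite eqn_leq jk.
subst j.
have h1 := IH k (leqnn k) (fun i ik => Hl i (ltnW ik)) (fun i a b => ltac:(exfalso; lia)).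
have h2 : 0 < x - z k by rewrite subr_gt0; apply: Hl.
move: h1; rewrite !subnn !expr0 !mul1r => h1.
exact: mulr_gt0.
Qed.


Lemma incr_lt (z : nat -> R) m : (forall i, (i.+1 < m)%N -> z i < z i.+1) ->
  forall i j, (i < j)%N -> (j < m)%N -> z i < z j.
Proof.
move=> H i; elim=> // j IH; rewrite ltnS leq_eqVlt => /orP[/eqP <-|ij] jm.
  by apply: H.
by apply: (lt_trans (IH ij (ltnW jm))); apply: H.
Qed.

Lemma incr_le (z : nat -> R) m : (forall i, (i.+1 < m)%N -> z i < z i.+1) ->
  forall i j, (i <= j)%N -> (j < m)%N -> z i <= z j.
Proof.
move=> H i j; rewrite leq_eqVlt => /orP[/eqP <-|ij] jm //.
exact: ltW (incr_lt H ij jm).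
Qed.

Lemma interlace_step m (y : nat -> R) (P : {poly R}) :
  (forall i, (i.+1 < m)%N -> y i < y i.+1) ->
  size P = m.+2 -> 0 < lead_coef P ->
  (forall i, (i < m)%N -> 0 < (-1) ^+ (m - i) * P.[y i]) ->
  exists z : nat -> R,
    (forall i, (i < m)%N -> z i < y i /\ y i < z i.+1) /\
    (forall i, (i <= m)%N -> root P (z i)) /\
    sorted <%R [seq z i | i <- iota 0 m.+1] /\
    P = lead_coef P *: \prod_(x <- [seq z i | i <- iota 0 m.+1]) ('X - x%:P).
Proof.
move=> yinc sP lP ysg.
have P0 : P != 0 by rewrite -size_poly_gt0 sP.
pose B := cauchy_bound P.
have B0 : 0 < B := cauchy_bound_gt0 P.
pose lo := Num.min (- B) (y 0%N - 1).
pose hi := Num.max B (y m.-1 + 1).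
pose e i := if i == 0%N then lo else if i == m.+1 then hi else y i.-1.
have lo_sg : 0 < (-1) ^+ m.+1 * P.[lo].
  apply: sg_pos.
  have h := sgp_minftyP (le_cauchy_bound P0).
  rewrite (h lo); last by rewrite in_itv /= ge_min lexx.
  rewrite /sgp_minfty sP /= sgrM (gtr0_sg lP) mulr1.
  by rewrite sgrX sgrN sgr1.
have hi_sg : 0 < (-1) ^+ 0 * P.[hi].
  apply: sg_pos.
  have h := sgp_pinftyP (ge_cauchy_bound P0).
  rewrite (h hi); last by rewrite in_itv /= le_max lexx.
  by rewrite /sgp_pinfty gtr0_sg // expr0.
have E1 i : (i <= m)%N -> e i < e i.+1.
  case: i => [|i] im.
    have l1 : lo <= - B by rewrite /lo ge_min lexx.
    have l2 : lo <= y 0%N - 1 by rewrite /lo ge_min lexx orbT.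
    have h1 : B <= hi by rewrite /hi le_max lexx.
    rewrite /e /=; case: (eqVneq m 0) => [m0|m0].
      rewrite m0 /=; lra.
    rewrite eqSS eq_sym (negbTE m0); lra.
  rewrite /e /= eqSS (ltn_eqF im).
  case: (eqVneq i.+1 m) => [im2|im2] /=.
    have h2 : y m.-1 + 1 <= hi by rewrite /hi le_max lexx orbT.
    rewrite -im2 /= in h2; rewrite im2 eqxx; lra.
  rewrite eqSS (negbTE im2); apply: yinc; by rewrite ltn_neqAle im2 im.
have E2 i : (i <= m.+1)%N -> 0 < (-1) ^+ (m.+1 - i) * P.[e i].
  case: i => [|i] im; first by rewrite subn0.
  rewrite /e /= eqSS subSS.
  case: (eqVneq i m) => [->|im2]; first by rewrite subnn.
  by apply: ysg; rewrite ltn_neqAle im2 -ltnS.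
have ex i : exists x, (i <= m)%N ==> [&& e i < x, x < e i.+1 & root P x].
  case: (leqP i m) => im; last by exists 0.
  have h : P.[e i] * P.[e i.+1] < 0.
    have A := E2 i (leqW im); have Bh := E2 i.+1 im.
    move: A Bh; rewrite subSS subSn // exprS.
    have ss : (-1) ^+ (m - i) * (-1) ^+ (m - i) = 1 :> R.
      by rewrite -exprD -signr_odd oddD addbb.
    move: ss; set s := (-1) ^+ (m - i) => ss A Bh.
    nra.
  case: (poly_ivtoo (ltW (E1 i im)) h) => x; rewrite in_itv /= => /andP [a b] r.
  by exists x; rewrite a b r.
pose z i := xchoose (ex i).
have zP i : (i <= m)%N -> [/\ e i < z i, z i < e i.+1 & root P (z i)].
  by move=> im; have := xchooseP (ex i); move/implyP/(_ im)/and3P.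
have eS i : (i < m)%N -> e i.+1 = y i.
  by move=> im; rewrite /e /= eqSS (ltn_eqF im).
have zinc i : (i.+1 < m.+1)%N -> z i < z i.+1.
  move=> im; have [_ a _] := zP i (ltnW im); have [b _ _] := zP i.+1 im.
  exact: lt_trans a b.
have srt : sorted <%R [seq z i | i <- iota 0 m.+1].
  apply: (homo_sorted_in (P := [pred i | (i < m.+1)%N]) (e := ltn)).
  - move=> i j; rewrite !inE => im jm ij. have ij2 : (i < j)%N by []. exact: (incr_lt zinc ij2 jm).
  - by apply/allP => i; rewrite mem_iota inE.
  - exact: iota_ltn_sorted.
exists z; split.
  move=> i im; have [_ a _] := zP i (ltnW im); have [b _ _] := zP i.+1 im.
  by rewrite -(eS i im); split.
split; first by move=> i im; have [_ _ r] := zP i im.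
split=> //.
apply: all_roots_prod_XsubC.
- by rewrite size_map size_iota.
- apply/allP => x /mapP [i]; rewrite mem_iota add0n => /andP [_ im] ->.
  by have [_ _ r] := zP i im.
- by rewrite uniq_rootsE; apply: lt_sorted_uniq.
Qed.

Lemma prod_eval (y : nat -> R) m t :
  (\prod_(x <- [seq y i | i <- iota 0 m]) ('X - x%:P)).[t] = \prod_(0 <= i < m) (t - y i).
Proof.
rewrite horner_prod big_map /index_iota subn0; apply: eq_bigr => i _.
by rewrite hornerXsubC.
Qed.

Lemma sign_transfer (s a b c : R) : `|s| = 1 -> 0 < s * a ->
  `|b - c * a| < c * `|a| -> 0 < c -> 0 < s * b.
Proof.
move=> ns sa h c0.
have h1 : s * a = `|a| by rewrite -[LHS]gtr0_norm // normrM ns mul1r.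
have h2 : `|s * (b - c * a)| < c * `|a| by rewrite normrM ns mul1r.
have h3 := ltrNnormlW h2.
have e : s * b = c * (s * a) + s * (b - c * a) by ring.
rewrite e h1; lra.
Qed.

Lemma consec_gen (a b : nat -> R) na nb d :
  (forall i, (i.+1 < na)%N -> a i < a i.+1) ->
  (forall i, (i.+1 < na)%N -> [/\ a i < b (i + d)%N, b (i + d)%N < a i.+1 & (i + d < nb)%N]) ->
  consec_between (fun x => exists2 i, (i < na)%N & x = a i)
                 (fun x => exists2 i, (i < nb)%N & x = b i).
Proof.
move=> ainc H u1 u2 [i ina ->] [k kna ->] lt nob.
have ik : (i < k)%N.
  rewrite ltnNge; apply/negP => ki.
  by move: lt; rewrite ltNge (incr_le ainc ki ina).
have ek : k = i.+1.
  apply/eqP; rewrite eqn_leq ik andbT leqNgt; apply/negP => ik2.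
  apply: (nob (a i.+1)); first by exists i.+1 => //; apply: ltn_trans ik2 kna.
  split; first by apply: ainc; apply: ltn_trans ik2 kna.
  by have := incr_lt ainc ik2 kna.
subst k.
have [h1 h2 h3] := H i kna.
by exists (b (i + d)%N); split => //; exists (i + d)%N.
Qed.

Lemma consec_ext (U U' V V' : R -> Prop) :
  (forall x, U x <-> U' x) -> (forall x, V x <-> V' x) ->
  consec_between U' V' -> consec_between U V.
Proof.
move=> hU hV h u1 u2 /hU a /hU b lt nob.
have [v [hv [l1 l2]]] := h u1 u2 a b lt (fun u hu => nob u (proj2 (hU u) hu)).
by exists v; split => //; apply/hV.
Qed.

Lemma interlaces_ext (U U' V V' : R -> Prop) :
  (forall x, U x <-> U' x) -> (forall x, V x <-> V' x) ->
  interlaces U' V' -> interlaces U V.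
Proof.
move=> hU hV [[u [v [a [b [c [d e]]]]]] [h1 h2]].
split; last by split; [apply: (consec_ext hU hV h1) | apply: (consec_ext hV hU h2)].
exists u, v; split; first by apply/hU.
split; first by move=> u' /hU; apply: b.
split; first by apply/hV.
by split => // v' /hV; apply: d.
Qed.

End Gen.


Section Lag.
Variable R : realType.
Variable alpha : R.
Hypothesis alpha_gt : -1 < alpha.

Definition bb (k : nat) : R := 2 * k%:R + alpha + 1.
Definition aa (k : nat) : R := k%:R * (k%:R + alpha).
Local Notation L := (hatL alpha).

Lemma hatL_pair_eq k : hatL_pair alpha k = (L k, L k.+1).
Proof. rewrite /hatL /=; by case: (hatL_pair alpha k). Qed.

Lemma hatL0 : L 0 = 1. Proof. by []. Qed.
Lemma hatL1 : L 1 = 'X - (alpha + 1)%:P. Proof. by []. Qed.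

Lemma hatL_rec k : L k.+2 = ('X - (bb k.+1)%:P) * L k.+1 - aa k.+1 *: L k.
Proof.
have := hatL_pair_eq k.+1; rewrite [hatL_pair _ k.+1]/= hatL_pair_eq.
by case=> <-.
Qed.

Lemma hatL_recE k x : (L k.+2).[x] = (x - bb k.+1) * (L k.+1).[x] - aa k.+1 * (L k).[x].
Proof. by rewrite hatL_rec !hornerE. Qed.

Lemma hatL_size_monic k : size (L k) = k.+1 /\ L k \is monic.
Proof.
suff H : forall j, (size (L j) = j.+1 /\ L j \is monic) /\ (size (L j.+1) = j.+2 /\ L j.+1 \is monic) by case: (H k).
clear k.
elim=> [|k [[s0 m0] [s1 m1]]].
  by rewrite hatL0 hatL1 size_polyC oner_neq0 monic1 size_XsubC monicXsubC.
split=> //.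
have sM : size (('X - (bb k.+1)%:P) * L k.+1) = k.+3.
  have sX : size ('X - (bb k.+1)%:P) = 2%N by exact: size_XsubC.
  have mX : 'X - (bb k.+1)%:P \is monic by exact: monicXsubC.
  by rewrite size_Mmonic ?monic_neq0 // sX s1.
have sA : (size (aa k.+1 *: L k) < k.+3)%N.
  by apply: (leq_ltn_trans (size_scale_leq _ _)); rewrite s0.
rewrite hatL_rec; split.
  by rewrite size_addl ?size_opp sM.
have mX : 'X - (bb k.+1)%:P \is monic by exact: monicXsubC.
by rewrite monicE lead_coefDl ?size_opp ?sM // lead_coef_Mmonic // (monicP m1).
Qed.

Lemma hatL_neg x : x <= 0 -> forall k,
  0 < (-1)^+k * (L k).[x] /\
  (k.+1%:R + alpha) * ((-1)^+k * (L k).[x]) <= (-1)^+k.+1 * (L k.+1).[x].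
Proof.
have ha := alpha_gt.
move=> x0; elim=> [|k [P0 H]].
  rewrite hatL0 hatL1 !hornerE /= expr1; split; first lra.
  lra.
have kk0 : 0 <= k%:R :> R by rewrite ler0n.
have P1 : 0 < (-1)^+k.+1 * (L k.+1).[x].
  have hk : 0 < k.+1%:R + alpha :> R by rewrite -natr1; lra.
  apply: (lt_le_trans _ H); exact: mulr_gt0.
split=> //.
have E : (-1)^+k.+2 * (L k.+2).[x] =
   (bb k.+1 - x) * ((-1)^+k.+1 * (L k.+1).[x]) - aa k.+1 * ((-1)^+k * (L k).[x]).
  rewrite hatL_recE !exprS; ring.
rewrite E /bb /aa; move: P0 H P1; rewrite -!natr1.
set p0 := _ * (L k).[x]; set p1 := _ * (L k.+1).[x] => P0 H P1.
nra.
Qed.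

Lemma hatL_big m x : (1 <= m)%N -> 4 * m%:R + 2 * alpha - 2 <= x -> forall k, (k < m)%N ->
  0 < (L k).[x] /\ (k.+1%:R + alpha) * (L k).[x] <= (L k.+1).[x].
Proof.
have ha := alpha_gt.
move=> m1 xb; elim=> [|k IH] km.
  rewrite hatL0 hatL1 !hornerE; split; first lra.
  have : 1 <= m%:R :> R by rewrite ler1n.
  lra.
have [P0 H] := IH (ltnW km).
have kk0 : 0 <= k%:R :> R by rewrite ler0n.
have P1 : 0 < (L k.+1).[x].
  have hk : 0 < k.+1%:R + alpha :> R by rewrite -natr1; lra.
  apply: (lt_le_trans _ H); exact: mulr_gt0.
split=> //.
have km' : (k.+2%:R : R) <= m%:R by rewrite ler_nat.
rewrite hatL_recE /bb /aa; move: P0 H P1 km'; rewrite -!natr1.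
set p0 := (L k).[x]; set p1 := (L k.+1).[x] => P0 H P1 km'.
nra.
Qed.

Lemma hatL_root_bound m y : (1 <= m)%N -> root (L m) y ->
  0 < y /\ y < 4 * m%:R + 2 * alpha - 2.
Proof.
have ha := alpha_gt.
move=> m1 /eqP r; split.
  rewrite ltNge; apply/negP => y0.
  have [P _] := hatL_neg y0 m; move: P; rewrite r mulr0 ltxx //.
rewrite ltNge; apply/negP => yb.
case: m m1 r yb => // m _ r yb.
have [P H] := hatL_big (ltn0Sn m) yb (ltnSn m).
have : 0 < (L m.+1).[y].
  have m0 : 0 <= m%:R :> R by rewrite ler0n.
  have hk : 0 < m.+1%:R + alpha :> R by rewrite -natr1; lra.
  apply: (lt_le_trans _ H); exact: mulr_gt0.
by rewrite r ltxx.
Qed.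

Lemma aa_pos k : (0 < k)%N -> 0 < aa k.
Proof.
have ha := alpha_gt.
move=> k0; rewrite /aa; have k1 : 1 <= k%:R :> R by rewrite ler1n.
apply: mulr_gt0; lra.
Qed.

Lemma hatL_roots m : exists y : nat -> R,
  (forall i, (i.+1 < m)%N -> y i < y i.+1) /\
  L m = \prod_(x <- [seq y i | i <- iota 0 m]) ('X - x%:P) /\
  (forall i, (i < m)%N -> 0 < (-1) ^+ (m - i) * (L m.+1).[y i]).
Proof.
elim: m => [|m [y [yinc [Ly ysg]]]].
  by exists (fun _ => 0); split=> //; split=> //; rewrite big_nil hatL0.
have [s1 m1] := hatL_size_monic m.+1.
have l1 : 0 < lead_coef (L m.+1) by rewrite (monicP m1) ltr01.
have [z [zint [zr [zs zP]]]] := interlace_step yinc s1 l1 ysg.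
have zinc : forall i, (i.+1 < m.+1)%N -> z i < z i.+1.
  move=> i im; have [a b] := zint i im; exact: lt_trans a b.
exists z; split=> //.
split; first by rewrite {1}zP (monicP m1) scale1r.
move=> i im.
rewrite hatL_recE.
have -> : (L m.+1).[z i] = 0 by apply/eqP; apply: zr; rewrite -ltnS.
have e : (L m).[z i] = \prod_(0 <= j < m) (z i - y j) by rewrite Ly prod_eval.
have hl : forall j, (j < i)%N -> y j < z i.
  move=> j ji; have jm : (j < m)%N by apply: (leq_trans ji); rewrite -ltnS.
  have [_ b] := zint j jm; apply: (lt_le_trans b); exact: (incr_le zinc ji im).
have hr : forall j, (i <= j)%N -> (j < m)%N -> z i < y j.
  move=> j ij jm; have [a _] := zint i (leq_ltn_trans ij jm).
  apply: (lt_le_trans a); exact: (incr_le yinc ij jm).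
have hs := prod_sign (ltnSE im) hl hr.
have ha := aa_pos (ltn0Sn m).
rewrite e subSn ?(ltnSE im) // exprS.
have -> : -1 * (-1) ^+ (m - i) * ((z i - bb m.+1) * 0 - aa m.+1 * \prod_(0 <= j < m) (z i - y j))
   = aa m.+1 * ((-1) ^+ (m - i) * \prod_(0 <= j < m) (z i - y j)) by ring.
exact: mulr_gt0.
Qed.

End Lag.


Section Main.
Variable R : realType.
Variables (alpha nu : R) (rho gamma : nat -> R) (K : nat).
Hypothesis alpha_gt : -1 < alpha.
Hypothesis nu_gt : 0 < nu.
Hypothesis rho_gt : forall n, 0 < rho n.
Hypothesis rho_ratio : forall n, (1 <= n)%N -> rho n.-1 / rho n <= nu.
Local Notation L := (hatL alpha).

Lemma natle (a b : nat) : (a <= b)%N -> a%:R <= b%:R :> R.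
Proof. by rewrite ler_nat. Qed.

Lemma Dbound (m n : nat) (y : R) : (n + 2 <= 2 * m)%N -> (9 <= n)%N ->
  0 < y -> y < 4 * n.-1%:R + 2 * alpha - 2 ->
  `|y - bb alpha m| + 1 <= 23 * aa alpha m.
Proof.
move=> h1 h2 y0 y1.
have ha := alpha_gt.
have H1 := natle h1; have H2 := natle h2.
move: H1 H2 y1; rewrite !natrD addr0 /bb /aa.
have -> : n.-1%:R = n%:R - 1 :> R.
  by case: n h1 h2 => // n _ _; rewrite -natr1 /=; ring.
set mm := m%:R; set nn := n%:R => H1 H2 y1.
have m0 : 11 <= 2 * mm by lra.
case: (lerP 0 (y - (2 * mm + alpha + 1))) => hy.
  rewrite ger0_norm //; nra.
rewrite ltr0_norm //; nra.
Qed.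

Lemma rho_bound n j : (j <= n)%N -> rho (n - j) <= nu ^+ j * rho n.
Proof.
elim: j => [|j IH] jn; first by rewrite subn0 expr0 mul1r.
have h := rho_ratio (n := n - j) ltac:(lia).
have e : (n - j).-1 = (n - j.+1)%N by lia.
rewrite e ler_pdivrMr // in h.
apply: (le_trans h); rewrite exprS -mulrA.
apply: ler_wpM2l; first exact: ltW.
exact: IH (ltnW jn).
Qed.

Lemma gamma_le j : (2 <= j <= K)%N -> `|gamma j| <= Gamma2 gamma K.
Proof.
move=> hj; rewrite /Gamma2.
apply: (@le_bigmax_seq _ _ _ (index_iota 2 K.+1) 0 j xpredT (fun j => `|gamma j|)) => //.
by rewrite mem_index_iota ltnS.
Qed.

Lemma Lbound n y : (2 * K <= n)%N -> (9 <= n)%N -> root (L n.-1) y ->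
  forall i, (i.+2 <= K)%N ->
  `|(L (n - i.+2)).[y]| <= 23 ^+ i * `|(L (n - 2)).[y]| /\
  `|(L (n - i.+1)).[y]| <= 23 ^+ i * `|(L (n - 2)).[y]|.
Proof.
move=> hK hn r.
have [y0 y1] := hatL_root_bound alpha_gt (m := n.-1) ltac:(lia) r.
set M := `|(L (n - 2)).[y]|.
have M0 : 0 <= M by rewrite normr_ge0.
elim=> [|i IH] hi.
  rewrite expr0 mul1r; split => //.
  move/eqP: r; rewrite subn1 => ->; by rewrite normr0.
have [A B] := IH (ltnW hi).
have e2 : (n - i.+1)%N = (n - i.+3).+2 by lia.
have e1 : (n - i.+2)%N = (n - i.+3).+1 by lia.
rewrite e1 in A *; rewrite e2 in B.
set k := (n - i.+3)%N in A B *.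
have t0 : 0 <= 23 ^+ i * M by apply: mulr_ge0 => //; apply: exprn_ge0.
split; last first.
  apply: (le_trans A); rewrite exprS -mulrA ler_peMl //; lra.
have rec := hatL_recE alpha k y.
have D := Dbound (m := k.+1) (n := n) ltac:(lia) hn y0 y1.
have ha := aa_pos alpha_gt (ltn0Sn k).
have e : aa alpha k.+1 * (L k).[y] = (y - bb alpha k.+1) * (L k.+1).[y] - (L k.+2).[y].
  rewrite rec; ring.
have H : aa alpha k.+1 * `|(L k).[y]| <= aa alpha k.+1 * (23 ^+ i.+1 * M).
  rewrite -(ger0_norm (ltW ha)) -normrM e (ger0_norm (ltW ha)).
  apply: (le_trans (ler_normB _ _)); rewrite normrM exprS.
  move: A B D t0; set t := 23 ^+ i * M; rewrite -mulrA -/t.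
  set d := `|y - bb alpha k.+1|; set p1 := `|(L k.+1).[y]|; set p2 := `|(L k.+2).[y]|.
  have d0 : 0 <= d by rewrite normr_ge0.
  nra.
by rewrite ler_pM2l in H.
Qed.

Lemma geom_eq : \sum_(2 <= j < K.+1) (23 * nu) ^+ (j - 2) = geomq (23 * nu) K.
Proof.
have -> : \sum_(2 <= j < K.+1) (23 * nu) ^+ (j - 2) = \sum_(i < K.-1) (23 * nu) ^+ i.
  rewrite -{1}[2%N]add0n big_addn.
  have -> : (K.+1 - 2 = K.-1)%N by lia.
  rewrite -(big_mkord xpredT (fun i => (23 * nu) ^+ i)).
  by apply: eq_bigr => i _; rewrite addnK.
rewrite /geomq; case: eqP => // c1.
rewrite subrX1 [(_ - 1) * _]mulrC mulfK //; apply/eqP => h; apply: c1; lra.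
Qed.

Lemma geom_ge0 : 0 <= geomq (23 * nu) K.
Proof.
rewrite -geom_eq; apply: sumr_ge0 => i _; apply: exprn_ge0.
have := nu_gt; lra.
Qed.

Lemma key_ineq (n : nat) : (0 < K)%N -> (2 * K <= n)%N ->
  (8^-1 * (23 * nu * 2 ^+ K.-1 * geomq (23 * nu) K * Gamma2 gamma K
              - 2 * `|alpha|) <= n%:R) ->
  ((nu - alpha + 1) / 2 <= n%:R) ->
  (alpha + 9 <= n%:R) ->
  Gamma2 gamma K * nu ^+ 2 * geomq (23 * nu) K < aa alpha n.-1.
Proof.
move=> K0 hK H1 H2 H3.
have ha := alpha_gt; have hnu := nu_gt.
have n8 : (8 < n)%N by rewrite -(ltr_nat R); lra.
have n9 : 9 <= n%:R :> R by rewrite (ler_nat R 9 n).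
have en : n.-1%:R = n%:R - 1 :> R.
  by case: n {H1 H2 H3 hK n9} n8 => // n _; rewrite -natr1 /=; ring.
rewrite /aa en.
case: (eqVneq K 1) => [K1|K1].
  have -> : geomq (23 * nu) K = 0.
    rewrite K1 /geomq; case: eqP => _; first by rewrite big_ord0.
    by rewrite expr0 subrr mul0r.
  rewrite mulr0; apply: mulr_gt0; lra.
have K2 : (2 <= K)%N by lia.
have G0 := geom_ge0.
have Gm0 : 0 <= Gamma2 gamma K.
  apply: le_trans (gamma_le (j := K) _); first exact: normr_ge0.
  by rewrite K2 leqnn.
have p2 : 2 <= 2 ^+ K.-1 :> R.
  case: K K2 {H1 G0 Gm0 K0 hK K1} => // [[|k]] // _ /=.
  rewrite exprS; have : 1 <= 2 ^+ k :> R by apply: exprn_ege1; lra.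
  nra.
set G := geomq (23 * nu) K in G0 H1 *; set g := Gamma2 gamma K in Gm0 H1 *.
set X := nu * G * g.
have X0 : 0 <= X by apply: mulr_ge0 => //; apply: mulr_ge0 => //; lra.
have hX : 46 * X <= 8 * n%:R + 2 * `|alpha|.
  have : 23 * nu * 2 ^+ K.-1 * G * g = 23 * 2 ^+ K.-1 * X by rewrite /X; ring.
  move=> e; rewrite e in H1.
  have : 46 * X <= 23 * 2 ^+ K.-1 * X by nra.
  lra.
have -> : g * nu ^+ 2 * G = nu * X by rewrite /X; ring.
have hnu2 : nu <= 2 * n%:R + alpha - 1 by lra.
have s1 : nu * X <= (2 * n%:R + alpha - 1) * X by nra.
apply: (le_lt_trans s1).
set nn := n%:R in n9 H3 hX hnu2 *.
case: (lerP 0 alpha) => a0.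
  rewrite ger0_norm // in hX.
  have h4 : 0 <= alpha * (nn - 9 - alpha) by nra.
  nra.
rewrite ltr0_norm // in hX.
nra.
Qed.

Lemma qn_eval n y : (lag_comb alpha rho gamma K n).[y] =
  \sum_(0 <= j < K.+1) (gamma j * rho (n - j)%N) * (L (n - j)).[y].
Proof. by rewrite /lag_comb horner_sum; apply: eq_bigr => j _; rewrite hornerZ. Qed.

Lemma main_sign (n : nat) y : gamma 0%N = 1 -> (0 < K)%N -> (2 * K <= n)%N ->
  (8^-1 * (23 * nu * 2 ^+ K.-1 * geomq (23 * nu) K * Gamma2 gamma K
              - 2 * `|alpha|) <= n%:R) ->
  ((nu - alpha + 1) / 2 <= n%:R) ->
  (alpha + 9 <= n%:R) ->
  root (L n.-1) y -> (L n).[y] != 0 ->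
  `|(lag_comb alpha rho gamma K n).[y] - rho n * (L n).[y]| < rho n * `|(L n).[y]|.
Proof.
move=> g0 K0 hK H1 H2 H3 r Ln0.
have ha := alpha_gt; have hnu := nu_gt.
have n8 : (8 < n)%N by rewrite -(ltr_nat R); lra.
have Lb := Lbound hK n8 r.
set M := `|(L (n - 2)).[y]| in Lb.
have ry : (L (n - 1)).[y] = 0 by apply/eqP; rewrite subn1.
have eLn : (L n).[y] = - aa alpha n.-1 * (L (n - 2)).[y].
  have e : n = (n - 2).+2 by lia.
  rewrite {1}e hatL_recE.
  have -> : (n - 2).+1 = (n - 1)%N by lia.
  have -> : (n - 1)%N = n.-1 by lia.
  rewrite -subn1 ry; ring.
have han := aa_pos alpha_gt (k := n.-1) ltac:(lia).
have nLn : `|(L n).[y]| = aa alpha n.-1 * M.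
  by rewrite eLn normrM normrN (ger0_norm (ltW han)).
have M0 : 0 < M.
  rewrite lt_neqAle normr_ge0 andbT; apply/negP => /eqP M0.
  by move: Ln0; rewrite -normr_eq0 nLn -M0 mulr0 eqxx.
rewrite qn_eval big_ltn // big_ltn // subn0 g0 mul1r ry mulr0 add0r addrC addKr.
set g := Gamma2 gamma K.
have rn := rho_gt n.
have step : `|\sum_(2 <= j < K.+1) gamma j * rho (n - j)%N * (L (n - j)).[y]|
   <= \sum_(2 <= j < K.+1) (g * nu ^+ 2 * rho n * M) * (23 * nu) ^+ (j - 2)%N.
  apply: (le_trans (ler_norm_sum _ _ _)).
  apply: ler_sum_nat => j /andP [j2 jK].
  have ej : j = (j - 2)%N.+2 by rewrite -addn2 subnK.
  have jK2 : ((j - 2)%N.+2 <= K)%N by rewrite -ej -ltnS.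
  have [A _] := Lb (j - 2)%N jK2.
  rewrite -ej in A.
  have j2K : (2 <= j <= K)%N by rewrite j2 -ltnS.
  have gj := gamma_le j2K.
  have jn : (j <= n)%N.
    apply: (leq_trans _ hK); rewrite -ltnS; apply: (leq_trans jK).
    by rewrite mul2n -addnn ltnS leq_addr.
  have rj := rho_bound (n := n) (j := j) jn.
  rewrite !normrM (gtr0_norm (rho_gt _)).
  have -> : g * nu ^+ 2 * rho n * M * (23 * nu) ^+ (j - 2)%N =
     g * (nu ^+ j * rho n) * (23 ^+ (j - 2)%N * M).
    have ex : nu ^+ j = nu ^+ 2 * nu ^+ (j - 2)%N by rewrite -exprD addnC subnK.
    rewrite ex exprMn; set a := nu ^+ (j - 2)%N; set b := (23 : R) ^+ (j - 2)%N; ring.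
  apply: ler_pM => //.
  - by apply: mulr_ge0; [exact: normr_ge0 | exact: ltW].
  - by apply: ler_pM => //; exact: ltW.
apply: (le_lt_trans step).
rewrite -mulr_sumr geom_eq nLn.
have ki := key_ineq K0 hK H1 H2 H3.
have -> : g * nu ^+ 2 * rho n * M * geomq (23 * nu) K =
  (g * nu ^+ 2 * geomq (23 * nu) K) * (rho n * M) by ring.
have -> : rho n * (aa alpha n.-1 * M) = aa alpha n.-1 * (rho n * M) by ring.
by rewrite ltr_pM2r //; apply: mulr_gt0.
Qed.

Lemma lag_size n : gamma 0%N = 1 -> (K <= n)%N ->
  size (lag_comb alpha rho gamma K n) = n.+1 /\
  lead_coef (lag_comb alpha rho gamma K n) = rho n.
Proof.
move=> g0 Kn.
rewrite /lag_comb big_ltn // subn0 g0 mul1r.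
have [sL mL] := hatL_size_monic alpha n.
have sr : leq (size (\sum_(1 <= j < K.+1) (gamma j * rho (n - j)%N) *: L (n - j)%N)) n.
  rewrite big_nat_cond.
  elim/big_ind: _.
  - by rewrite size_poly0.
  - move=> p q hp hq; apply: (leq_trans (size_add _ _)); by rewrite geq_max hp hq.
  - move=> j /andP [/andP [j1 jK] _].
    apply: (leq_trans (size_scale_leq _ _)).
    have [sj _] := hatL_size_monic alpha (n - j)%N.
    rewrite sj.
    by rewrite ltn_subrL j1 /= (leq_trans j1 (leq_trans _ Kn)) // -ltnS.
have sn : size (rho n *: L n) = n.+1 by rewrite size_scale ?sL // gt_eqF.
split.
  by rewrite size_addl sn // ltnS.
by rewrite lead_coefDl ?sn ?ltnS // lead_coefZ (monicP mL) mulr1.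
Qed.

Lemma P_mono x : x <= 0 -> forall k j, (1 <= k)%N -> (k <= j)%N ->
  (-1) ^+ k * (L k).[x] <= (-1) ^+ j * (L j).[x].
Proof.
move=> x0 k; elim=> [|j IH] k1 kj; first by move: k1 kj; case: k.
case: (eqVneq k j.+1) => [->//|kj2].
have kj' : (k <= j)%N by rewrite -ltnS ltn_neqAle kj2 kj.
apply: (le_trans (IH k1 kj')).
have [P0 H] := hatL_neg alpha_gt x0 j.
apply: (le_trans _ H).
have j1 : 1 <= j%:R :> R by rewrite ler1n (leq_trans k1 kj').
have ha := alpha_gt.
rewrite -natr1; nra.
Qed.

Lemma eventually_pos : gamma 0%N = 1 -> (0 < K)%N ->
  exists N : nat, forall n : nat, (N <= n)%N ->
     forall x : R, root (lag_comb alpha rho gamma K n) x -> 0 < x.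
Proof.
move=> g0 K0.
set C := \sum_(1 <= j < K.+1) `|gamma j| * nu ^+ j.
have C0 : 0 <= C.
  apply: sumr_ge0 => j _; apply: mulr_ge0; first exact: normr_ge0.
  apply: exprn_ge0; exact: ltW.
have Ca : 0 <= C + `|alpha| by apply: addr_ge0 => //; exact: normr_ge0.
exists (maxn K.+1 (Num.Def.archi_bound (C + `|alpha|))).
move=> n; rewrite geq_max => /andP [nK nb] x rx.
rewrite ltNge; apply/negP => x0.
have hb := archi_boundP Ca.
have nb' : (Num.Def.archi_bound (C + `|alpha|))%:R <= n%:R :> R by rewrite ler_nat.
have ha := alpha_gt.
have aa1 : - `|alpha| <= alpha by rewrite lerNnormlW.
have nC : C < n%:R + alpha by lra.
have n1 : (1 <= n)%N by apply: leq_trans nK; rewrite ltnS.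
pose P k := (-1) ^+ k * (L k).[x].
have Ppos k : 0 < P k by have [h _] := hatL_neg alpha_gt x0 k.
have nL k : `|(L k).[x]| = P k.
  by rewrite -(gtr0_norm (Ppos k)) /P normrM normr_sign mul1r.
have en : n = (n.-1).+1 by rewrite prednK.
have HPn : (n%:R + alpha) * P n.-1 <= P n.
  have [_ h] := hatL_neg alpha_gt x0 n.-1; by rewrite -en in h.
move/eqP: rx.
rewrite qn_eval big_ltn // subn0 g0 mul1r.
set E := \sum_(1 <= j < K.+1) _ => rx.
have rn := rho_gt n.
have hE : `|E| <= C * rho n * P n.-1.
  apply: (le_trans (ler_norm_sum _ _ _)).
  rewrite /C mulr_suml mulr_suml.
  apply: ler_sum_nat => j /andP [j1 jK].
  rewrite !normrM (gtr0_norm (rho_gt _)) nL.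
  have jn : (j <= n)%N by apply: ltnW; apply: leq_trans jK nK.
  have rj := rho_bound jn.
  have Pj : P (n - j)%N <= P n.-1.
    apply: P_mono => //.
      by rewrite subn_gt0 (leq_trans jK).
    by rewrite -subn1 leq_sub2l.
  rewrite -!mulrA; apply: ler_wpM2l; first exact: normr_ge0.
  rewrite mulrA; apply: ler_pM => //; [exact: ltW | exact: ltW].
have e : rho n * (L n).[x] = - E by apply/eqP; rewrite -addr_eq0 rx.
have : `|rho n * (L n).[x]| = rho n * P n by rewrite normrM (gtr0_norm rn) nL.
rewrite e normrN => hh.
have Pn1 := Ppos n.-1.
have t1 : 0 < (n%:R + alpha - C) * (rho n * P n.-1) by apply: mulr_gt0; [lra | exact: mulr_gt0].
have t2 : rho n * ((n%:R + alpha) * P n.-1) <= rho n * P n by apply: ler_wpM2l => //; exact: ltW.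
move: hE; rewrite hh; nra.
Qed.

End Main.


Unset Implicit Arguments. Set Strict Implicit. Set Printing Implicit Defensive.

Theorem mainTheorem7 (R : realType) (alpha nu : R) (rho gamma : nat -> R) (K : nat) :
  -1 < alpha ->
  0 < nu ->
  (forall n, 0 < rho n) ->
  (forall n, (1 <= n)%N -> rho n.-1 / rho n <= nu) ->
  (0 < K)%N ->
  gamma 0%N = 1 ->
  gamma K != 0 ->
  (forall n : nat,
     (8^-1 * (23 * nu * 2 ^+ K.-1 * geomq (23 * nu) K * Gamma2 gamma K
              - 2 * `|alpha|) <= n%:R) ->
     ((nu - alpha + 1) / 2 <= n%:R) ->
     (alpha + 9 <= n%:R) ->
     (2 * K <= n)%N ->
     real_simple_zeros (lag_comb alpha rho gamma K n) /\
     interlaces (zeros (lag_comb alpha rho gamma K n)) (zeros (Lag alpha n.-1)))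
  /\
  (exists N : nat, forall n : nat, (N <= n)%N ->
     forall x : R, root (lag_comb alpha rho gamma K n) x -> 0 < x).
Proof.
move=> ha hnu hrho hratio K0 g0 gK.
split; last exact: (eventually_pos ha hnu hrho hratio g0 K0).
move=> n H1 H2 H3 hK.
have n8 : (8 < n)%N by rewrite -(ltr_nat R); lra.
have [y [yinc [Ly ysg]]] := hatL_roots ha n.-1.
have en : n.-1.+1 = n by rewrite prednK // (leq_trans _ n8).
rewrite en in ysg.
set q := lag_comb alpha rho gamma K n.
have ry i : (i < n.-1)%N -> root (hatL alpha n.-1) (y i).
  by move=> hi; rewrite Ly root_prod_XsubC; apply: map_f; rewrite mem_iota.
have qsg i : (i < n.-1)%N -> 0 < (-1) ^+ (n.-1 - i) * q.[y i].
  move=> hi; have s := ysg i hi.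
  have Ln0 : (hatL alpha n).[y i] != 0.
    by apply/negP => /eqP e; move: s; rewrite e mulr0 ltxx.
  have ms := main_sign ha hnu hrho hratio g0 K0 hK H1 H2 H3 (ry i hi) Ln0.
  exact: (sign_transfer (normr_sign _ _) s ms (hrho n)).
have Kn : (K <= n)%N by apply: leq_trans hK; rewrite mul2n -addnn leq_addr.
have [sq lq] := lag_size alpha hrho g0 Kn.
have sq' : size q = n.-1.+2 by rewrite sq en.
have lq0 : 0 < lead_coef q by rewrite lq.
have [z [zint [zr [zs zP]]]] := interlace_step yinc sq' lq0 qsg.
split.
  split; first by rewrite -size_poly_gt0 sq.
  by exists [seq z i | i <- iota 0 n.-1.+1].
have zinc : forall i, (i.+1 < n.-1.+1)%N -> z i < z i.+1.
  move=> i im; have [a b] := zint i im; exact: lt_trans a b.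
have n1 : (0 < n.-1)%N by rewrite -ltnS en (leq_trans _ n8).
apply: (interlaces_ext (U' := fun x => exists2 i, (i < n.-1.+1)%N & x = z i)
                       (V' := fun x => exists2 i, (i < n.-1)%N & x = y i)).
- move=> x; rewrite /zeros {1}zP rootZ ?gt_eqF // root_prod_XsubC; split.
    by move/mapP => [i]; rewrite mem_iota add0n => /andP [_ hi] ->; exists i.
  by case=> i hi ->; apply: map_f; rewrite mem_iota.
- move=> x; rewrite /zeros /Lag rootZ; last first.
    apply: mulf_neq0; first by rewrite signr_eq0.
    by rewrite invr_eq0 pnatr_eq0 -lt0n fact_gt0.
  rewrite Ly root_prod_XsubC; split.
    by move/mapP => [i]; rewrite mem_iota add0n => /andP [_ hi] ->; exists i.
  by case=> i hi ->; apply: map_f; rewrite mem_iota.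
split.
  exists (z 0%N), (y 0%N); split; first by exists 0%N.
  split; first by move=> u' [i hi ->]; exact: (incr_le zinc (leq0n i) hi).
  split; first by exists 0%N.
  split; first by move=> v' [i hi ->]; exact: (incr_le yinc (leq0n i) hi).
  by have [a _] := zint 0%N n1.
split.
  apply: (consec_gen (d := 0%N) zinc) => i hi.
  by rewrite addn0; have [a b] := zint i hi; split.
apply: (consec_gen (d := 1%N) yinc) => i hi.
rewrite addn1; have [_ a] := zint i (ltn_trans (ltnSn i) hi); have [b _] := zint i.+1 hi.
by split => //; rewrite ltnS ltnW.
Qed.
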